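(* Let $r\in\wedge^2\mathfrak g$ be a non-degenerate solution of the classical Yang–Baxter equation on a finite-dimensional real Lie algebra $(\mathfrak g,[\cdot,\cdot])$ (i.e. $r^\sharp$ is invertible), and let $n:\mathfrak g\to\mathfrak g$ be a linear map with $n\circ r^\sharp=r^\sharp\circ{}^tn$ and $C(r,n)=0$. Then $nr$ (defined by $(nr)^\sharp=n\circ r^\sharp$) is a solution of the classical Yang–Baxter equation if and only if $n$ is a Nijenhuis operator.
   Context: For $r\in\wedge^2\mathfrak g$, $r^\sharp:\mathfrak g^*\to\mathfrak g$ is defined by $\langle\eta_2,r^\sharp\eta_1\rangle=r(\eta_1,\eta_2)$. $r$ solves the classical Yang–Baxter equation iff $\langle\eta_1,[r^\sharp\eta_2,r^\sharp\eta_3]\rangle-\langle\eta_2,[r^\sharp\eta_1,r^\sharp\eta_3]\rangle+\langle\eta_3,[r^\sharp\eta_1,r^\sharp\eta_2]\rangle=0$ for all $\eta_i$. $\langle\mathrm{ad}^*_\xi\eta,\zeta\rangle=-\langle\eta,[\xi,\zeta]\rangle$; ${}^tn$ is the transpose of $n$; $C(r,n)(\eta_1,\eta_2)=[{}^tn,\mathrm{ad}^*_{r^\sharp\eta_1}]\eta_2-[{}^tn,\mathrm{ad}^*_{r^\sharp\eta_2}]\eta_1$. $n$ is Nijenhuis if $n([n\xi_1,\xi_2]+[\xi_1,n\xi_2]-n[\xi_1,\xi_2])=[n\xi_1,n\xi_2]$ for all $\xi_i$. *)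

(* Defs.v *)
(* The Lie algebra g is R^d (column vectors 'cV[R]_d) with an
   abstract Lie bracket; its dual g^* is also 'cV[R]_d, with pairing
   <eta, xi> = eta^T xi. *)
From HB Require Import structures.
From mathcomp Require Import all_boot all_order all_algebra.
From mathcomp Require Import reals.
Set Implicit Arguments. Unset Strict Implicit. Unset Printing Implicit Defensive.
Import Order.TTheory GRing.Theory Num.Theory.
Local Open Scope ring_scope.

Section LieDefs.
Variables (R : realType) (d : nat).
Notation vec := 'cV[R]_d.

Definition pair (eta xi : vec) : R := (eta^T *m xi) 0 0.

Definition is_lie_bracket (br : vec -> vec -> vec) : Prop :=
  [/\ (forall a x y z, br (a *: x + y) z = a *: br x z + br y z),
      (forall a x y z, br z (a *: x + y) = a *: br z x + br z y),
      (forall x, br x x = 0)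
    & (forall x y z, br x (br y z) + br y (br z x) + br z (br x y) = 0)].

(* a bivector r in wedge^2 g is a skew bilinear form on g^*,
   r(eta1, eta2) = eta1^T r eta2, with r^T = - r *)
Definition bivector (r : 'M[R]_d) : Prop := r^T = - r.
Definition bivec_app (r : 'M[R]_d) (eta1 eta2 : vec) : R := (eta1^T *m r *m eta2) 0 0.

(* r^sharp : g^* -> g, <eta2, r^sharp eta1> = r(eta1, eta2); as a matrix it is r^T *)
Definition rsharp (r : 'M[R]_d) : 'M[R]_d := r^T.

Definition CYBE (br : vec -> vec -> vec) (r : 'M[R]_d) : Prop :=
  forall eta1 eta2 eta3 : vec,
    pair eta1 (br (rsharp r *m eta2) (rsharp r *m eta3))
  - pair eta2 (br (rsharp r *m eta1) (rsharp r *m eta3))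
  + pair eta3 (br (rsharp r *m eta1) (rsharp r *m eta2)) = 0.

(* coadjoint action: <ad^*_xi eta, zeta> = - <eta, [xi, zeta]>
   (coordinates obtained by pairing with the standard basis) *)
Definition coad (br : vec -> vec -> vec) (xi eta : vec) : vec :=
  \col_i (- pair eta (br xi (delta_mx i 0))).

Definition tr_op (n : 'M[R]_d) : 'M[R]_d := n^T.

Definition Crn (br : vec -> vec -> vec) (r n : 'M[R]_d) (eta1 eta2 : vec) : vec :=
  (tr_op n *m coad br (rsharp r *m eta1) eta2
     - coad br (rsharp r *m eta1) (tr_op n *m eta2))
  - (tr_op n *m coad br (rsharp r *m eta2) eta1
     - coad br (rsharp r *m eta2) (tr_op n *m eta1)).

Definition nr (n r : 'M[R]_d) : 'M[R]_d := (n *m rsharp r)^T.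

Definition Nijenhuis (br : vec -> vec -> vec) (n : 'M[R]_d) : Prop :=
  forall x1 x2 : vec,
    n *m (br (n *m x1) x2 + br x1 (n *m x2) - n *m br x1 x2)
    = br (n *m x1) (n *m x2).

End LieDefs.

(* Main.v *)
Require Import Defs.
From HB Require Import structures.
From mathcomp Require Import all_boot all_order all_algebra.
From mathcomp Require Import reals.
From mathcomp Require Import lra.
Import GRing.Theory Num.Theory.
Local Open Scope ring_scope.

Section Aux.
Variables (R : realType) (d : nat).
Notation vec := 'cV[R]_d.

Lemma pair_mulr (a b : vec) (M : 'M[R]_d) : pair a (M *m b) = pair (M^T *m a) b.
Proof. by rewrite /pair trmx_mul trmxK mulmxA. Qed.
Lemma pair_mull (a b : vec) (M : 'M[R]_d) : pair (M *m a) b = pair a (M^T *m b).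
Proof. by rewrite pair_mulr trmxK. Qed.
Lemma pairDr (a b c : vec) : pair a (b + c) = pair a b + pair a c.
Proof. by rewrite /pair mulmxDr mxE. Qed.
Lemma pairNr (a b : vec) : pair a (- b) = - pair a b.
Proof. by rewrite /pair mulmxN mxE. Qed.
Lemma pairBr (a b c : vec) : pair a (b - c) = pair a b - pair a c.
Proof. by rewrite pairDr pairNr. Qed.
Lemma pairZr (a b : vec) k : pair a (k *: b) = k * pair a b.
Proof. by rewrite /pair -scalemxAr mxE. Qed.
Lemma pairDl (a b c : vec) : pair (a + b) c = pair a c + pair b c.
Proof. by rewrite /pair linearD /= mulmxDl mxE. Qed.
Lemma pairNl (a b : vec) : pair (- a) b = - pair a b.
Proof. by rewrite /pair linearN /= mulNmx mxE. Qed.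
Lemma pairBl (a b c : vec) : pair (a - b) c = pair a c - pair b c.
Proof. by rewrite pairDl pairNl. Qed.
Lemma pair0l (b : vec) : pair 0 b = 0.
Proof. by rewrite /pair linear0 mul0mx mxE. Qed.
Lemma pairE (a b : vec) : pair a b = \sum_k a k 0 * b k 0.
Proof. by rewrite /pair !mxE; apply: eq_bigr => k _; rewrite mxE. Qed.

Lemma pair_delta (i : 'I_d) (v : vec) : pair (delta_mx i 0) v = v i 0.
Proof.
rewrite pairE (bigD1 i) //= big1 ?addr0; first by rewrite mxE !eqxx mul1r.
by move=> k /negPf ki; rewrite mxE ki mul0r.
Qed.

Variable br : vec -> vec -> vec.
Hypothesis Hbr : is_lie_bracket br.

Lemma br0r x : br x 0 = 0.
Proof.
case: Hbr => _ H _ _; have := H 1 0 0 x.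
rewrite scale1r addr0 => /(congr1 (fun v => v - br x 0)) /=.
rewrite subrr addrK => H0; exact: (esym (etrans H0 (scale1r _))).
Qed.
Lemma brDr x y z : br z (x + y) = br z x + br z y.
Proof. by case: Hbr => _ H _ _; have := H 1 x y z; rewrite !scale1r. Qed.
Lemma brZr a x z : br z (a *: x) = a *: br z x.
Proof. by case: Hbr => _ H _ _; have := H a x 0 z; rewrite !addr0 br0r addr0. Qed.
Lemma br0l x : br 0 x = 0.
Proof.
case: Hbr => H _ _ _; have := H 1 0 0 x.
rewrite scale1r addr0 => /(congr1 (fun v => v - br 0 x)) /=.
rewrite subrr addrK => H0; exact: (esym (etrans H0 (scale1r _))).
Qed.
Lemma brDl x y z : br (x + y) z = br x z + br y z.
Proof. by case: Hbr => H _ _ _; have := H 1 x y z; rewrite !scale1r. Qed.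
Lemma brskew x y : br x y = - br y x.
Proof.
case: Hbr => _ _ H _; have := H (x + y).
rewrite brDl !brDr !H add0r addr0 => /eqP; rewrite addr_eq0 => /eqP ->.
by [].
Qed.

Lemma br_sum x (F : 'I_d -> vec) : br x (\sum_k F k) = \sum_k br x (F k).
Proof. exact: (big_morph (br x) (fun a b => brDr a b x) (br0r x)). Qed.

Lemma pair_sumr (a : vec) (F : 'I_d -> vec) : pair a (\sum_k F k) = \sum_k pair a (F k).
Proof.
have p0 : pair a 0 = 0 by rewrite /pair mulmx0 mxE.
exact: (big_morph (pair a) (pairDr a) p0).
Qed.

Lemma vec_decomp (z : vec) : z = \sum_k z k 0 *: delta_mx k 0.
Proof.
apply/matrixP => i j; rewrite (ord1 j) summxE (bigD1 i) //= big1 ?addr0.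
  by rewrite !mxE !eqxx mulr1.
by move=> k ki; rewrite !mxE eq_sym (negPf ki) mulr0.
Qed.

Lemma pair_coad xi eta (z : vec) : pair (coad br xi eta) z = - pair eta (br xi z).
Proof.
rewrite pairE {2}(vec_decomp z) br_sum pair_sumr -sumrN.
apply: eq_bigr => k _; rewrite mxE brZr pairZr mulrC mulrN.
by [].
Qed.

End Aux.

Theorem mainTheorem8 (R : realType) (d : nat)
  (br : 'cV[R]_d -> 'cV[R]_d -> 'cV[R]_d) (r n : 'M[R]_d) :
  is_lie_bracket br ->
  bivector r ->
  CYBE br r ->
  rsharp r \in unitmx ->
  n *m rsharp r = rsharp r *m tr_op n ->
  (forall eta1 eta2 : 'cV[R]_d, Crn br r n eta1 eta2 = 0) ->
  (CYBE br (nr n r) <-> Nijenhuis br n).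
Proof.
move=> Hbr _ Hcy HPu Hn HC.
have PnP : rsharp (nr n r) = n *m rsharp r by rewrite /rsharp /nr trmxK.
move: Hcy HPu Hn HC; rewrite /CYBE /Nijenhuis PnP /tr_op.
set P := rsharp r => Hcy HPu Hn HC.
set Q := invmx P.
have PQ x : P *m (Q *m x) = x by rewrite mulmxA mulmxV // mul1mx.
have QP x : Q *m (P *m x) = x by rewrite mulmxA mulVmx // mul1mx.
have nQ : n^T *m Q = Q *m n.
  have := congr1 (fun M => Q *m M *m Q) Hn.
  rewrite /= !mulmxA mulVmx // mul1mx -!mulmxA mulmxV // mulmx1 => ->.
  by [].
have H1 a b : pair (Q *m a) (n *m b) = pair (Q *m (n *m a)) b.
  by rewrite pair_mulr mulmxA nQ -mulmxA.
have cyc a b c : pair (Q *m a) (br b c) - pair (Q *m b) (br a c)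
    + pair (Q *m c) (br a b) = 0.
  by have := Hcy (Q *m a) (Q *m b) (Q *m c); rewrite !PQ.
have Cc a b z : pair (Q *m (n *m b)) (br a z) - pair (Q *m b) (br a (n *m z))
    + pair (Q *m a) (br b (n *m z)) - pair (Q *m (n *m a)) (br b z) = 0.
  have := congr1 (fun v => pair v z) (HC (Q *m a) (Q *m b)).
  rewrite /= /Crn /tr_op -/P pair0l !pairBl => H.
  rewrite !pair_mull trmxK !(@pair_coad _ _ br Hbr) !PQ in H.
  rewrite !mulmxA nQ -!mulmxA in H.
  rewrite -H; lra.
have sk := @brskew _ _ br Hbr.
have key x1 x2 x3 : pair (Q *m x1) (br (n *m x2) (n *m x3))
    - pair (Q *m x2) (br (n *m x1) (n *m x3))
    + pair (Q *m x3) (br (n *m x1) (n *m x2))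
  = pair (Q *m x1) (br (n *m x2) (n *m x3)
      - n *m (br (n *m x2) x3 + br x2 (n *m x3) - n *m br x2 x3)).
  rewrite pairBr H1 !pairBr !pairDr H1.
  have e1 := cyc (n *m x1) x2 (n *m x3).
  have e2 := cyc (n *m x1) (n *m x2) x3.
  have e3 := Cc x2 x3 (n *m x1).
  have e4 := cyc (n *m (n *m x1)) x2 x3.
  rewrite (sk x2 (n *m x1)) (sk x3 (n *m x1)) (sk x2 (n *m (n *m x1)))
    (sk x3 (n *m (n *m x1))) !pairNr in e3.
  lra.
have pair0r (v : 'cV[R]_d) : pair v 0 = 0 by rewrite /pair mulmx0 mxE.
split.
- move=> Hs x1 x2; apply/eqP; rewrite eq_sym -subr_eq0; apply/eqP.
  apply/matrixP => i j; rewrite (ord1 j) [RHS]mxE -pair_delta.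
  have := Hs (delta_mx i 0) (Q *m x1) (Q *m x2); rewrite -!mulmxA !PQ.
  have := key (P *m delta_mx i 0) x1 x2; rewrite !QP => ->.
  by [].
- move=> HN e1 e2 e3; rewrite -!mulmxA.
  have := key (P *m e1) (P *m e2) (P *m e3); rewrite !QP => ->.
  by rewrite HN subrr pair0r.
Qed.
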